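(* Let $G$ be a structured quadratic-bilinear system given by $(\mathcal C,\mathcal K,\mathcal B,\mathcal N,\mathcal H)$ with structured generalized transfer functions, and $\widehat G$ the reduced-order system obtained by projection with $V,W\in\mathbb C^{n\times r}$ of full column rank. Let $\sigma_1,\sigma_2\in\mathbb C$ be such that $\mathcal C,\mathcal K,\mathcal B,\mathcal N$ can be evaluated at $\sigma_1,\sigma_2$, $\mathcal H$ at $(\sigma_1,\sigma_1)$, and $\mathcal K(\sigma_1),\mathcal K(\sigma_2)$ are invertible; assume $W^{\mathsf H}\mathcal K(\sigma_i)V$ is invertible for $i=1,2$. If $$\operatorname{span}(V)\supseteq\operatorname{span}\big(\mathcal K(\sigma_1)^{-1}\mathcal B(\sigma_1)\big),\qquad\operatorname{span}(W)\supseteq\operatorname{span}\big(\mathcal K(\sigma_2)^{-\mathsf H}\mathcal C(\sigma_2)^{\mathsf H}\big),$$ then $$G_1^{(B)}(\sigma_1)=\widehat G_1^{(B)}(\sigma_1),\quad G_1^{(B)}(\sigma_2)=\widehat G_1^{(B)}(\sigma_2),\quad G_2^{(N,(B))}(\sigma_1,\sigma_2)=\widehat G_2^{(N,(B))}(\sigma_1,\sigma_2),$$ $$G_3^{(H,(B),(B))}(\sigma_1,\sigma_1,\sigma_2)=\widehat G_3^{(H,(B),(B))}(\sigma_1,\sigma_1,\sigma_2).$$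
   Context: A structured quadratic-bilinear system (in frequency domain) with $n$ states, $m$ inputs and $p$ outputs is given by matrix-valued functions $\mathcal C:\mathbb C\to\mathbb C^{p\times n}$, $\mathcal K:\mathbb C\to\mathbb C^{n\times n}$, $\mathcal B:\mathbb C\to\mathbb C^{n\times m}$, $\mathcal N:\mathbb C\to\mathbb C^{n\times nm}$ with $\mathcal N(s)=[\mathcal N_1(s)\ \cdots\ \mathcal N_m(s)]$, $\mathcal N_j(s)\in\mathbb C^{n\times n}$, and $\mathcal H:\mathbb C\times\mathbb C\to\mathbb C^{n\times n^2}$. Its structured generalized transfer functions are $G_1^{(B)}(s_1)=\mathcal C(s_1)\mathcal K(s_1)^{-1}\mathcal B(s_1)$, $G_2^{(N,(B))}(s_1,s_2)=\mathcal C(s_2)\mathcal K(s_2)^{-1}\mathcal N(s_1)\big(I_m\otimes\mathcal K(s_1)^{-1}\mathcal B(s_1)\big)$, $G_3^{(H,(B),(B))}(s_1,s_2,s_3)=\mathcal C(s_3)\mathcal K(s_3)^{-1}\mathcal H(s_2,s_1)\big(\mathcal K(s_2)^{-1}\mathcal B(s_2)\otimes\mathcal K(s_1)^{-1}\mathcal B(s_1)\big)$, wherever the inverses exist; $\otimes$ is the Kronecker product. The reduced-order system obtained by projection with $V,W\in\mathbb C^{n\times r}$ is given by $\widehat{\mathcal C}(s)=\mathcal C(s)V$, $\widehat{\mathcal K}(s)=W^{\mathsf H}\mathcal K(s)V$, $\widehat{\mathcal B}(s)=W^{\mathsf H}\mathcal B(s)$, $\widehat{\mathcal N}(s)=W^{\mathsf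 H}\mathcal N(s)(I_m\otimes V)$, $\widehat{\mathcal H}(s_1,s_2)=W^{\mathsf H}\mathcal H(s_1,s_2)(V\otimes V)$, where $W^{\mathsf H}$ is the conjugate transpose and $\mathcal K(s)^{-\mathsf H}=(\mathcal K(s)^{-1})^{\mathsf H}$; its generalized transfer functions $\widehat G$ are defined by the same formulas with hatted functions. *)

(* Defs.v *)
From HB Require Import structures.
From mathcomp Require Import all_boot all_order all_algebra.
From mathcomp Require Import reals.
From mathcomp.real_closed Require Import complex mxtens.

Set Implicit Arguments.
Unset Strict Implicit.
Unset Printing Implicit Defensive.

Import GRing.Theory.
Local Open Scope ring_scope.

Definition ctrmx (R : realType) (k l : nat) (A : 'M[R[i]]_(k, l)) : 'M[R[i]]_(l, k) :=
  map_mx (@conjc R) A^T.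

(* column span inclusion: span(A) ⊆ span(B)  (MathComp's <=%MS is on row spaces) *)
Definition colspan_sub (R : realType) (k a b : nat)
  (A : 'M[R[i]]_(k, a)) (B : 'M[R[i]]_(k, b)) : bool :=
  (A^T <= B^T)%MS.

Section QB.
Variables (R : realType) (n m p : nat).
Local Notation C := R[i].

Definition G1 (Cf : C -> 'M[C]_(p, n)) (Kf : C -> 'M[C]_n) (Bf : C -> 'M[C]_(n, m))
  (s1 : C) : 'M[C]_(p, m) :=
  Cf s1 *m invmx (Kf s1) *m Bf s1.

Definition G2 (Cf : C -> 'M[C]_(p, n)) (Kf : C -> 'M[C]_n) (Bf : C -> 'M[C]_(n, m))
  (Nf : C -> 'M[C]_(n, m * n)) (s1 s2 : C) : 'M[C]_(p, m * m) :=
  Cf s2 *m invmx (Kf s2) *m Nf s1 *m (1%:M *t (invmx (Kf s1) *m Bf s1)).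

Definition G3 (Cf : C -> 'M[C]_(p, n)) (Kf : C -> 'M[C]_n) (Bf : C -> 'M[C]_(n, m))
  (Hf : C -> C -> 'M[C]_(n, n * n)) (s1 s2 s3 : C) : 'M[C]_(p, m * m) :=
  Cf s3 *m invmx (Kf s3) *m Hf s2 s1
     *m ((invmx (Kf s2) *m Bf s2) *t (invmx (Kf s1) *m Bf s1)).
End QB.

Section Reduced.
Variables (R : realType) (n m p r : nat).
Local Notation C := R[i].
Variables (V W : 'M[C]_(n, r)).

Definition redC (Cf : C -> 'M[C]_(p, n)) : C -> 'M[C]_(p, r) :=
  fun s => Cf s *m V.
Definition redK (Kf : C -> 'M[C]_n) : C -> 'M[C]_r :=
  fun s => ctrmx W *m Kf s *m V.
Definition redB (Bf : C -> 'M[C]_(n, m)) : C -> 'M[C]_(r, m) :=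
  fun s => ctrmx W *m Bf s.
Definition redN (Nf : C -> 'M[C]_(n, m * n)) : C -> 'M[C]_(r, m * r) :=
  fun s => ctrmx W *m Nf s *m (1%:M *t V).
Definition redH (Hf : C -> C -> 'M[C]_(n, n * n)) : C -> C -> 'M[C]_(r, r * r) :=
  fun s1 s2 => ctrmx W *m Hf s1 s2 *m (V *t V).
End Reduced.

(* Main.v *)
Require Import Defs.
From HB Require Import structures.
From mathcomp Require Import all_boot all_order all_algebra.
From mathcomp Require Import reals.
From mathcomp.real_closed Require Import complex mxtens.

Import GRing.Theory.
Local Open Scope ring_scope.

Lemma ctrmx_mul (R : realType) (a b c : nat) (A : 'M[R[i]]_(a, b)) (B : 'M[R[i]]_(b, c)) :
  ctrmx (A *m B) = ctrmx B *m ctrmx A.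
Proof. by rewrite /ctrmx trmx_mul map_mxM. Qed.

Lemma ctrmxK (R : realType) (a b : nat) (A : 'M[R[i]]_(a, b)) : ctrmx (ctrmx A) = A.
Proof.
apply/matrixP=> i j; rewrite /ctrmx !mxE; exact: conjcK.
Qed.

Theorem corollary4p5 (R : realType) (n m p r : nat)
  (Cf : R[i] -> 'M[R[i]]_(p, n)) (Kf : R[i] -> 'M[R[i]]_n)
  (Bf : R[i] -> 'M[R[i]]_(n, m)) (Nf : R[i] -> 'M[R[i]]_(n, m * n))
  (Hf : R[i] -> R[i] -> 'M[R[i]]_(n, n * n))
  (V W : 'M[R[i]]_(n, r)) (s1 s2 : R[i]) :
  \rank V = r -> \rank W = r ->
  Kf s1 \in unitmx -> Kf s2 \in unitmx ->
  ctrmx W *m Kf s1 *m V \in unitmx ->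
  ctrmx W *m Kf s2 *m V \in unitmx ->
  colspan_sub (invmx (Kf s1) *m Bf s1) V ->
  colspan_sub (ctrmx (invmx (Kf s2)) *m ctrmx (Cf s2)) W ->
  [/\ G1 Cf Kf Bf s1 = G1 (redC V Cf) (redK V W Kf) (redB W Bf) s1,
      G1 Cf Kf Bf s2 = G1 (redC V Cf) (redK V W Kf) (redB W Bf) s2,
      G2 Cf Kf Bf Nf s1 s2
        = G2 (redC V Cf) (redK V W Kf) (redB W Bf) (redN V W Nf) s1 s2
    & G3 Cf Kf Bf Hf s1 s1 s2
        = G3 (redC V Cf) (redK V W Kf) (redB W Bf) (redH V W Hf) s1 s1 s2].
Proof.
move=> _ _ uK1 uK2 uR1 uR2 hV hW.
move: hV; rewrite /colspan_sub => /submxP [Z hZ].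
move: hW; rewrite /colspan_sub => /submxP [D hD].
set Y := Z^T.
have X1E : invmx (Kf s1) *m Bf s1 = V *m Y.
  by rewrite -[LHS]trmxK hZ trmx_mul trmxK.
set Y2 := ctrmx D^T.
have C2E : Cf s2 *m invmx (Kf s2) = Y2 *m ctrmx W.
  have : ctrmx (invmx (Kf s2)) *m ctrmx (Cf s2) = W *m D^T.
    by rewrite -[LHS]trmxK hD trmx_mul trmxK.
  move=> h; have := congr1 (@ctrmx R _ _) h.
  by rewrite !ctrmx_mul !ctrmxK.
have B1E : Bf s1 = Kf s1 *m (V *m Y).
  by rewrite -X1E mulmxA mulmxV // mul1mx.
have C2E' : Cf s2 = Y2 *m ctrmx W *m Kf s2.
  by rewrite -C2E -mulmxA mulVmx // mulmx1.
have R1 : invmx (ctrmx W *m Kf s1 *m V) *m (ctrmx W *m Bf s1) = Y.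
  have -> : ctrmx W *m Bf s1 = (ctrmx W *m Kf s1 *m V) *m Y by rewrite B1E !mulmxA.
  by rewrite mulKmx.
have R2 : Cf s2 *m V *m invmx (ctrmx W *m Kf s2 *m V) = Y2.
  have -> : Cf s2 *m V = Y2 *m (ctrmx W *m Kf s2 *m V) by rewrite C2E' !mulmxA.
  by rewrite mulmxK.
rewrite /G1 /G2 /G3 /redC /redK /redB /redN /redH /=.
split.
- by rewrite -mulmxA X1E -[RHS]mulmxA R1 mulmxA.
- by rewrite C2E R2 !mulmxA.
- rewrite C2E R2 R1 X1E.
  rewrite -!mulmxA (tensmx_mul (1%:M : 'M[R[i]]_m) V (1%:M : 'M[R[i]]_m) Y) mul1mx //.
- rewrite C2E R2 R1 X1E.
  by rewrite -!mulmxA (tensmx_mul V V Y Y).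
Qed.
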